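(* $H\mathfrak P'=H\mathcal P=\mathcal P\setminus\{(1,0,1)\}$, where for a set $X$ of matrices and a set $Y$ of triples, $XY=\{M(x,y,z)^t:M\in X,\ (x,y,z)\in Y\}$.
   Context: Let $\mathfrak P=\{(x,y,z)\in\mathbb Z_{>0}^3: 2\mid y,\ \gcd(x,y,z)=1,\ x^2+y^2=z^2\}$ (primitive Pythagorean triples), $\mathfrak P'=\mathfrak P\cup\{(1,0,1)\}$, and $\mathcal P=\{(x,y,z)\in\mathfrak P:\min\{x,y\}<z/2\}\cup\{(1,0,1)\}$. Let $A=\begin{pmatrix}1&-2&2\\2&-1&2\\2&-2&3\end{pmatrix}$, $B=\begin{pmatrix}1&2&2\\2&1&2\\2&2&3\end{pmatrix}$, $C=\begin{pmatrix}-1&2&2\\-2&1&2\\-2&2&3\end{pmatrix}$, and let $G$ be the monoid generated by $I_3,A,B,C$ under matrix multiplication, acting on triples as column vectors. Let $H$ be the set of all matrices of the forms $A^2NB$, $A^kB$, $ABNB$, $C^2NB$, $C^kB$, $CBNB$, $(AC)^kA^2NB$, $(AC)^kABNB$, $(AC)^kAB$, $(CA)^kC^2NB$, $(CA)^kCBNB$, $(CA)^kCB$, with $N\in G$ and $k\in\mathbb Z_{>0}$. *)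

(* Defs.v *)
From HB Require Import structures.
From mathcomp Require Import all_boot all_order all_algebra.
Set Implicit Arguments. Unset Strict Implicit. Unset Printing Implicit Defensive.
Import Order.TTheory GRing.Theory Num.Theory.
Local Open Scope ring_scope.

Definition triple := (int * int * int)%type.

Definition colv (t : triple) : 'cV[int]_3 :=
  \col_(i < 3) nth 0 [:: t.1.1; t.1.2; t.2] i.

Definition mx3 (a b c d e f g h k : int) : 'M[int]_3 :=
  \matrix_(i < 3, j < 3)
     nth 0 (nth [::] [:: [:: a; b; c]; [:: d; e; f]; [:: g; h; k]] i) j.

Definition mA : 'M[int]_3 := mx3 1 (-2) 2  2 (-1) 2  2 (-2) 3.
Definition mB : 'M[int]_3 := mx3 1 2 2  2 1 2  2 2 3.
Definition mC : 'M[int]_3 := mx3 (-1) 2 2  (-2) 1 2  (-2) 2 3.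

Definition PPT (t : triple) : Prop :=
  let: (x, y, z) := t in
  0 < x /\ 0 < y /\ 0 < z /\ (2 %| y)%Z /\
  gcdz (gcdz x y) z = 1 /\ x ^+ 2 + y ^+ 2 = z ^+ 2.

Definition t101 : triple := (1, 0, 1).

Definition PPT' (t : triple) : Prop := PPT t \/ t = t101.

(* calligraphic P : min{x,y} < z/2, written 2*min{x,y} < z *)
Definition Pcal (t : triple) : Prop :=
  (PPT t /\ 2 * Num.min t.1.1 t.1.2 < t.2) \/ t = t101.

Inductive inG : 'M[int]_3 -> Prop :=
  | inG1 : inG 1
  | inGA N : inG N -> inG (mA * N)
  | inGB N : inG N -> inG (mB * N)
  | inGC N : inG N -> inG (mC * N).

Inductive inH : 'M[int]_3 -> Prop :=
  | H1 N : inG N -> inH (mA ^+ 2 * N * mB)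
  | H2 k : (0 < k)%N -> inH (mA ^+ k * mB)
  | H3 N : inG N -> inH (mA * mB * N * mB)
  | H4 N : inG N -> inH (mC ^+ 2 * N * mB)
  | H5 k : (0 < k)%N -> inH (mC ^+ k * mB)
  | H6 N : inG N -> inH (mC * mB * N * mB)
  | H7 N k : inG N -> (0 < k)%N -> inH ((mA * mC) ^+ k * mA ^+ 2 * N * mB)
  | H8 N k : inG N -> (0 < k)%N -> inH ((mA * mC) ^+ k * mA * mB * N * mB)
  | H9 k : (0 < k)%N -> inH ((mA * mC) ^+ k * mA * mB)
  | H10 N k : inG N -> (0 < k)%N -> inH ((mC * mA) ^+ k * mC ^+ 2 * N * mB)
  | H11 N k : inG N -> (0 < k)%N -> inH ((mC * mA) ^+ k * mC * mB * N * mB)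
  | H12 k : (0 < k)%N -> inH ((mC * mA) ^+ k * mC * mB).

Definition actset (X : 'M[int]_3 -> Prop) (Y : triple -> Prop) (t : triple) : Prop :=
  exists M, X M /\ exists s, Y s /\ colv t = M *m colv s.

(* Main.v *)
Require Import Defs.
From HB Require Import structures.
From mathcomp Require Import all_boot all_order all_algebra.
From Stdlib Require Import ZArith Lia Psatz.
Set Implicit Arguments. Unset Strict Implicit. Unset Printing Implicit Defensive.
Import Order.TTheory GRing.Theory Num.Theory.
Local Open Scope ring_scope.

Definition zz (a : int) : Z :=
  match a with Posz n => Z.of_nat n | Negz n => (- Z.of_nat n.+1)%Z end.

Lemma zz0 : zz 0 = 0%Z. Proof. by []. Qed.
Lemma zz1 : zz 1 = 1%Z. Proof. by []. Qed.
Lemma zzNegz n : zz (Negz n) = (- Z.of_nat n - 1)%Z.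
Proof. rewrite /zz Nat2Z.inj_succ; lia. Qed.
Lemma zzPosz n : zz (Posz n) = Z.of_nat n.
Proof. by []. Qed.

Lemma zzS (w : int) : zz (w + 1) = (zz w + 1)%Z.
Proof.
case: w => [n|n].
  change (Posz n + 1) with (Posz (n + 1)).  rewrite !zzPosz Nat2Z.inj_add; lia.
case: n => [|n]; first by [].
have -> : Negz n.+1 + 1 = Negz n.
  by rewrite !NegzE -[n.+2]addn1 PoszD opprD subrK.
rewrite !zzNegz Nat2Z.inj_succ; lia.
Qed.

Lemma zzP (w : int) : zz (w - 1) = (zz w - 1)%Z.
Proof. have := zzS (w - 1); rewrite subrK; lia. Qed.

Lemma zzD (a b : int) : zz (a + b) = (zz a + zz b)%Z.
Proof.
elim/int_rec: a => [|n IH|n IH].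
- by rewrite add0r.
- rewrite -[n.+1]addn1 PoszD addrAC !zzS IH; move: (zz (- n%:Z)) (zz b) => p q; lia.
- rewrite -[n.+1]addn1 PoszD opprD addrAC !zzP IH; move: (zz (- n%:Z)) (zz b) => p q; lia.
Qed.

Lemma zzN (a : int) : zz (- a) = (- zz a)%Z.
Proof. have := zzD a (- a); rewrite subrr /=; lia. Qed.

Lemma zzM (a b : int) : zz (a * b) = (zz a * zz b)%Z.
Proof.
elim/int_rec: a => [|n IH|n IH].
- by rewrite mul0r.
- have e : (n.+1%:Z) * b = n%:Z * b + b by rewrite -addn1 PoszD mulrDl mul1r.
  have e2 : (n.+1%:Z) = n%:Z + 1 by rewrite -addn1 PoszD.
  rewrite e zzD IH e2 zzS; move: (zz n) (zz b) => p q; lia.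
- have e : (- n.+1%:Z) * b = (- n%:Z) * b - b by rewrite -addn1 PoszD opprD mulrDl mulN1r.
  have e2 : (- n.+1%:Z) = - n%:Z - 1 by rewrite -addn1 PoszD opprD.
  rewrite e zzD IH e2 zzP !zzN; lia.
Qed.

Lemma zz_nat (n : nat) : zz (n%:R) = Z.of_nat n.
Proof. by rewrite natz. Qed.

Lemma zz_ge0 (a : int) : (0 <= a) <-> (0 <= zz a)%Z.
Proof.
case: a => [n|n]; rewrite ?zzNegz ?zzPosz; split => h; try lia; first by [].
by rewrite NegzE oppr_ge0 in h.
Qed.

Lemma zz_le (a b : int) : (a <= b) <-> (zz a <= zz b)%Z.
Proof. rewrite -subr_ge0 zz_ge0 zzD zzN; lia. Qed.

Lemma zz_inj (a b : int) : a = b <-> zz a = zz b.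
Proof.
split=> [->//|h]; apply/eqP; rewrite eq_le; apply/andP; split; apply/zz_le; lia.
Qed.

Lemma zz_lt (a b : int) : (a < b) <-> (zz a < zz b)%Z.
Proof.
rewrite lt_neqAle; split.
  case/andP=> /eqP h /zz_le h2.
  have h3 : zz b <> zz a by move=> e; apply: h; apply/zz_inj.
  lia.
move=> h; apply/andP; split; last by apply/zz_le; lia.
by apply/eqP=> /zz_inj; lia.
Qed.

Lemma zzX2 (a : int) : zz (a ^+ 2) = (zz a * zz a)%Z.
Proof. by rewrite expr2 zzM. Qed.

Ltac zpush := repeat (rewrite zzD || rewrite zzN || rewrite zzM || rewrite zzX2 || rewrite zz_nat || rewrite zz0 || rewrite zz1).

Definition trp (v : 'cV[int]_3) : triple := (v ord0 ord0, v (inord 1) ord0, v (inord 2) ord0).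
Definition mapt (M : 'M[int]_3) (t : triple) : triple := trp (M *m colv t).

Lemma colvK t : trp (colv t) = t.
Proof. case: t => [[x y] z]. by rewrite /trp /colv !mxE !inordK. Qed.

Lemma trpK v : colv (trp v) = v.
Proof.
apply/matrixP => i j; rewrite !mxE (ord1 j).
case: i => [[|[|[|i]]] hi] //=.
- by congr (v _ _); apply: val_inj.
- by congr (v _ _); apply: val_inj; rewrite /= inordK.
- by congr (v _ _); apply: val_inj; rewrite /= inordK.
Qed.

Lemma colv_inj t s : colv t = colv s -> t = s.
Proof. by move=> h; rewrite -(colvK t) h colvK. Qed.

Lemma mapt_mul M N t : mapt (M * N) t = mapt M (mapt N t).
Proof. by rewrite /mapt trpK -mulmxE mulmxA. Qed.

Lemma mapt1 t : mapt 1 t = t.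
Proof. by rewrite /mapt mul1mx colvK. Qed.

Definition fA (t : triple) : triple := let: (x, y, z) := t in
  (x - 2*y + 2*z, 2*x - y + 2*z, 2*x - 2*y + 3*z).
Definition fB (t : triple) : triple := let: (x, y, z) := t in
  (x + 2*y + 2*z, 2*x + y + 2*z, 2*x + 2*y + 3*z).
Definition fC (t : triple) : triple := let: (x, y, z) := t in
  (- x + 2*y + 2*z, - (2*x) + y + 2*z, - (2*x) + 2*y + 3*z).

Lemma maptA t : mapt mA t = fA t.
Proof.
case: t => [[x y] z].
rewrite /mapt /trp /colv /mA /mx3 !mxE !big_ord_recr !big_ord0 /= !mxE !inordK //=.
congr (_, _, _); apply/zz_inj; zpush; lia.
Qed.

Section ZS.
Local Open Scope Z_scope.
Lemma sq_lt a b : 0 <= b -> a*a < b*b -> a < b.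
Proof. intros. destruct (Z_lt_ge_dec a b); auto. nia. Qed.
Lemma zlt (X Y Z : Z) (hx : 0 < X) (hy : 0 < Y) (hz : 0 < Z) (he : X*X + Y*Y = Z*Z) : X < Z /\ Y < Z. Proof. split; apply sq_lt; nia. Qed.
Lemma zsum (X Y Z : Z) (hx : 0 < X) (hy : 0 < Y) (hz : 0 < Z) (he : X*X + Y*Y = Z*Z) : Z < X + Y. Proof. apply sq_lt; nia. Qed.
Lemma zdesc (X Y Z : Z) (hx : 0 < X) (hy : 0 < Y) (hz : 0 < Z) (he : X*X + Y*Y = Z*Z) : 0 < 3*Z - 2*X - 2*Y.
Proof. pose proof (Z.square_nonneg (X-Y)). assert (2*(X+Y) < 3*Z); [apply sq_lt; nia| lia]. Qed.
Lemma zL (X Y Z : Z) (hx : 0 < X) (hy : 0 < Y) (hz : 0 < Z) (he : X*X + Y*Y = Z*Z) : 2*X < Z -> 0 < X + 2*Y - 2*Z. Proof. intros. assert (2*Z - X < 2*Y); [apply sq_lt; nia|lia]. Qed.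
Lemma zR (X Y Z : Z) (hx : 0 < X) (hy : 0 < Y) (hz : 0 < Z) (he : X*X + Y*Y = Z*Z) : 2*Y < Z -> 0 < 2*X + Y - 2*Z. Proof. intros. assert (2*Z - Y < 2*X); [apply sq_lt; nia|lia]. Qed.
Lemma znn (X Y Z : Z) (hx : 0 < X) (hy : 0 < Y) (hz : 0 < Z) (he : X*X + Y*Y = Z*Z) : X + 2*Y - 2*Z < 0 -> 2*X + Y - 2*Z < 0 -> False.
Proof. intros. pose proof (zsum hx hy hz he). assert (0 < (2*Z - X - 2*Y)*(2*Z-2*X-Y)) by nia. nia. Qed.
Lemma zv0 (X Y Z : Z) (hx : 0 < X) (hy : 0 < Y) (hz : 0 < Z) (he : X*X + Y*Y = Z*Z) : 2*X + Y - 2*Z = 0 -> 3*Z = 5*X.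
Proof. intros. pose proof (zlt hx hy hz he). assert ((5*X - 3*Z)*(X - Z) = 0) by nia. apply Z.mul_eq_0 in H1. lia. Qed.
Lemma zu0 (X Y Z : Z) (hx : 0 < X) (hy : 0 < Y) (hz : 0 < Z) (he : X*X + Y*Y = Z*Z) : X + 2*Y - 2*Z = 0 -> 3*Z = 5*Y.
Proof. intros. pose proof (zlt hx hy hz he). assert ((5*Y - 3*Z)*(Y - Z) = 0) by nia. apply Z.mul_eq_0 in H1. lia. Qed.
End ZS.

Definition gA (t : triple) : triple := let: (x, y, z) := t in
  (x + 2*y - 2*z, - (2*x) - y + 2*z, - (2*x) - 2*y + 3*z).
Definition gB (t : triple) : triple := let: (x, y, z) := t in
  (x + 2*y - 2*z, 2*x + y - 2*z, - (2*x) - 2*y + 3*z).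
Definition gC (t : triple) : triple := let: (x, y, z) := t in
  (- x - 2*y + 2*z, 2*x + y - 2*z, - (2*x) - 2*y + 3*z).

Lemma maptB t : mapt mB t = fB t.
Proof.
case: t => [[x y] z].
rewrite /mapt /trp /colv /mB /mx3 !mxE !big_ord_recr !big_ord0 /= !mxE !inordK //=.
congr (_, _, _); apply/zz_inj; zpush; lia.
Qed.

Lemma maptC t : mapt mC t = fC t.
Proof.
case: t => [[x y] z].
rewrite /mapt /trp /colv /mC /mx3 !mxE !big_ord_recr !big_ord0 /= !mxE !inordK //=.
congr (_, _, _); apply/zz_inj; zpush; lia.
Qed.

Lemma fgA t : fA (gA t) = t.
Proof. case: t => [[x y] z] /=; congr (_, _, _); apply/zz_inj; zpush; lia. Qed.
Lemma fgB t : fB (gB t) = t.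
Proof. case: t => [[x y] z] /=; congr (_, _, _); apply/zz_inj; zpush; lia. Qed.
Lemma fgC t : fC (gC t) = t.
Proof. case: t => [[x y] z] /=; congr (_, _, _); apply/zz_inj; zpush; lia. Qed.

Lemma PPTz x y z : PPT (x, y, z) ->
  [/\ (0 < zz x)%Z, (0 < zz y)%Z, (0 < zz z)%Z & (zz x * zz x + zz y * zz y = zz z * zz z)%Z].
Proof.
case=> hx [hy [hz [_ [_ he]]]].
move/zz_lt: hx; move/zz_lt: hy; move/zz_lt: hz; move/zz_inj: he.
zpush => he hz hy hx; split => //.
Qed.

Lemma dvd_comb d (a b c u v w e : int) : e = a*u + b*v + c*w ->
  u \in dvdz d -> v \in dvdz d -> w \in dvdz d -> e \in dvdz d.
Proof.
move=> -> /dvdzP[qu ->] /dvdzP[qv ->] /dvdzP[qw ->]; apply/dvdzP.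
exists (a*qu + b*qv + c*qw); apply/zz_inj; zpush; ring.
Qed.

Lemma gcd_lin (x y z x' y' z' a b c d e f g h k : int) :
  x = a*x' + b*y' + c*z' -> y = d*x' + e*y' + f*z' -> z = g*x' + h*y' + k*z' ->
  gcdz (gcdz x y) z = 1 -> gcdz (gcdz x' y') z' = 1.
Proof.
move=> ex ey ez h1.
set G := gcdz (gcdz x' y') z'.
have gx : x' \in dvdz G by apply: dvdz_trans (dvdz_gcdl _ _) (dvdz_gcdl _ _).
have gy : y' \in dvdz G by apply: dvdz_trans (dvdz_gcdl _ _) (dvdz_gcdr _ _).
have gz : z' \in dvdz G by apply: dvdz_gcdr.
have : 1 \in dvdz G.
  rewrite -h1 dvdz_gcd dvdz_gcd.
  by rewrite (dvd_comb ex gx gy gz) (dvd_comb ey gx gy gz) (dvd_comb ez gx gy gz).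
by rewrite dvdz1 /G /gcdz /= => /eqP ->.
Qed.

Lemma par_lin (y y' a b : int) : y' = a*y + b*2 -> y \in dvdz 2 -> y' \in dvdz 2.
Proof.
move=> e hy; apply: (dvd_comb (a:=a) (b:=b) (c:=0) _ hy (dvdzz 2) (dvdz0 2)).
by rewrite e mul0r addr0.
Qed.

Lemma PPT_of x y z x' y' z' (a b c d e f g h k p q : int) :
  PPT (x,y,z) ->
  0 < x' -> 0 < y' -> 0 < z' ->
  y' = p*y + q*2 ->
  x = a*x' + b*y' + c*z' -> y = d*x' + e*y' + f*z' -> z = g*x' + h*y' + k*z' ->
  x'^+2 + y'^+2 = z'^+2 ->
  PPT (x',y',z').
Proof.
case=> _ [_ [_ [h2 [hg _]]]] hx hy hz ep ex ey ez he.
split; first done. split; first done. split; first done.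
split; first exact: par_lin ep h2.
split; first exact: gcd_lin ex ey ez hg.
done.
Qed.

Ltac zgoal := first [apply/zz_lt | apply/zz_inj | apply/zz_le]; zpush.

Lemma PPT_fA t : PPT t -> PPT (fA t).
Proof.
case: t => [[x y] z] H; have [hx hy hz he] := PPTz H; have [lx ly] := zlt hx hy hz he.
apply: (PPT_of (a:=1) (b:=2) (c:=-2) (d:=-2) (e:=-1) (f:=2) (g:=-2) (h:=-2) (k:=3) (p:=-1) (q:=x+z) H);
 zgoal; nia.
Qed.
Lemma PPT_fB t : PPT t -> PPT (fB t).
Proof.
case: t => [[x y] z] H; have [hx hy hz he] := PPTz H; have [lx ly] := zlt hx hy hz he.
apply: (PPT_of (a:=1) (b:=2) (c:=-2) (d:=2) (e:=1) (f:=-2) (g:=-2) (h:=-2) (k:=3) (p:=1) (q:=x+z) H);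
 zgoal; nia.
Qed.
Lemma PPT_fC t : PPT t -> PPT (fC t).
Proof.
case: t => [[x y] z] H; have [hx hy hz he] := PPTz H; have [lx ly] := zlt hx hy hz he.
apply: (PPT_of (a:=-1) (b:=-2) (c:=2) (d:=2) (e:=1) (f:=-2) (g:=-2) (h:=-2) (k:=3) (p:=1) (q:=z-x) H);
 zgoal; nia.
Qed.

Notation U x y z := (zz x + 2 * zz y - 2 * zz z)%Z.
Notation V x y z := (2 * zz x + zz y - 2 * zz z)%Z.

Lemma PPT_gA x y z : PPT (x,y,z) -> (0 < U x y z)%Z -> (V x y z < 0)%Z -> PPT (gA (x,y,z)).
Proof.
move=> H hu hv.
have [hx hy hz he] := PPTz H; have hd := zdesc hx hy hz he.
apply: (PPT_of (a:=1) (b:=-2) (c:=2) (d:=2) (e:=-1) (f:=2) (g:=2) (h:=-2) (k:=3) (p:=-1) (q:=z-x) H);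
 zgoal; nia.
Qed.
Lemma PPT_gB x y z : PPT (x,y,z) -> (0 < U x y z)%Z -> (0 < V x y z)%Z -> PPT (gB (x,y,z)).
Proof.
move=> H hu hv.
have [hx hy hz he] := PPTz H; have hd := zdesc hx hy hz he.
apply: (PPT_of (a:=1) (b:=2) (c:=2) (d:=2) (e:=1) (f:=2) (g:=2) (h:=2) (k:=3) (p:=1) (q:=x-z) H);
 zgoal; nia.
Qed.
Lemma PPT_gC x y z : PPT (x,y,z) -> (U x y z < 0)%Z -> (0 < V x y z)%Z -> PPT (gC (x,y,z)).
Proof.
move=> H hu hv.
have [hx hy hz he] := PPTz H; have hd := zdesc hx hy hz he.
apply: (PPT_of (a:=-1) (b:=2) (c:=2) (d:=-2) (e:=1) (f:=2) (g:=-2) (h:=2) (k:=3) (p:=1) (q:=x-z) H);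
 zgoal; nia.
Qed.

Lemma fB101 : fB t101 = (3, 4, 5).
Proof. rewrite /t101 /=; congr (_, _, _); apply/zz_inj; zpush; lia. Qed.
Lemma fA101 : fA t101 = (3, 4, 5).
Proof. rewrite /t101 /=; congr (_, _, _); apply/zz_inj; zpush; lia. Qed.
Lemma fC101 : fC t101 = t101.
Proof. rewrite /t101 /=; congr (_, _, _); apply/zz_inj; zpush; lia. Qed.

Lemma PPT345 : PPT (3, 4, 5).
Proof.
split; first by apply/zz_lt; zpush; lia.
split; first by apply/zz_lt; zpush; lia.
split; first by apply/zz_lt; zpush; lia.
split; first by [].
split; first by vm_compute.
by apply/zz_inj; zpush; lia.
Qed.

Lemma PPT'_fB s : PPT' s -> PPT (fB s).
Proof. by case=> [h|->]; [apply: PPT_fB | rewrite fB101; apply: PPT345]. Qed.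

Lemma inG_PPT N w : inG N -> PPT w -> PPT (mapt N w).
Proof.
move=> hN; elim: hN w => [|P _ IH|P _ IH|P _ IH] w hw.
- by rewrite mapt1.
- by rewrite mapt_mul maptA; apply/PPT_fA/IH.
- by rewrite mapt_mul maptB; apply/PPT_fB/IH.
- by rewrite mapt_mul maptC; apply/PPT_fC/IH.
Qed.

Definition Lr (t : triple) := 2 * t.1.1 < t.2.
Definition Rr (t : triple) := 2 * t.1.2 < t.2.

Lemma LAA t : PPT t -> Lr (fA (fA t)).
Proof.
case: t => [[x y] z] H; have [hx hy hz he] := PPTz H.
rewrite /Lr /=; apply/zz_lt; zpush; lia.
Qed.
Lemma LAB t : PPT' t -> Lr (fA (fB t)).
Proof.
case=> [H|->]; last by rewrite /Lr /t101 /=; apply/zz_lt; zpush; lia.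
move: H; case: t => [[x y] z] H; have [hx hy hz he] := PPTz H.
rewrite /Lr /=; apply/zz_lt; zpush; lia.
Qed.
Lemma RCC t : PPT t -> Rr (fC (fC t)).
Proof.
case: t => [[x y] z] H; have [hx hy hz he] := PPTz H.
rewrite /Rr /=; apply/zz_lt; zpush; lia.
Qed.
Lemma RCB t : PPT' t -> Rr (fC (fB t)).
Proof.
case=> [H|->]; last by rewrite /Rr /t101 /=; apply/zz_lt; zpush; lia.
move: H; case: t => [[x y] z] H; have [hx hy hz he] := PPTz H.
rewrite /Rr /=; apply/zz_lt; zpush; lia.
Qed.
Lemma LAC t : Lr (fA (fC t)) <-> Lr t.
Proof.
case: t => [[x y] z]; rewrite /Lr /=; rewrite !zz_lt; zpush; lia.
Qed.
Lemma RCA t : Rr (fC (fA t)) <-> Rr t.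
Proof.
case: t => [[x y] z]; rewrite /Rr /=; rewrite !zz_lt; zpush; lia.
Qed.

Lemma powAC k t : PPT t -> Lr t -> PPT (mapt ((mA * mC) ^+ k) t) /\ Lr (mapt ((mA * mC) ^+ k) t).
Proof.
move=> H L; elim: k => [|k [IH1 IH2]]; first by rewrite expr0 mapt1.
rewrite exprS !mapt_mul maptA maptC; split.
  by apply/PPT_fA/PPT_fC.
by apply/LAC.
Qed.

Lemma powCA k t : PPT t -> Rr t -> PPT (mapt ((mC * mA) ^+ k) t) /\ Rr (mapt ((mC * mA) ^+ k) t).
Proof.
move=> H L; elim: k => [|k [IH1 IH2]]; first by rewrite expr0 mapt1.
rewrite exprS !mapt_mul maptC maptA; split.
  by apply/PPT_fC/PPT_fA.
by apply/RCA.
Qed.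

Lemma PPT_pos t : PPT t -> 0 < t.1.2.
Proof. by case: t => [[x y] z] [_ [hy _]]. Qed.

Lemma partA M s : inH M -> PPT' s ->
  PPT (mapt M s) /\ (Lr (mapt M s) \/ Rr (mapt M s)).
Proof.
move=> hM hs; have hB := PPT'_fB hs.
case: hM => [N hN|k hk|N hN|N hN|k hk|N hN|N k hN hk|N k hN hk|k hk|N k hN hk|N k hN hk|k hk].
- rewrite expr2 !mapt_mul !maptA maptB.
  have hw := inG_PPT hN hB.
  by split; [apply/PPT_fA/PPT_fA | left; apply: LAA].
- case: k hk => [//|k] _; rewrite exprS; case: k => [|k].
    rewrite expr0 mulr1 mapt_mul maptA maptB.
    by split; [apply/PPT_fA | left; apply: LAB hs].
  rewrite exprS !mapt_mul !maptA maptB.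
  have hw : PPT (mapt (mA ^+ k) (fB s)).
    by elim: k => [|k IH]; [rewrite expr0 mapt1 | rewrite exprS mapt_mul maptA; apply: PPT_fA].
  by split; [apply/PPT_fA/PPT_fA | left; apply: LAA].
- rewrite !mapt_mul maptA !maptB.
  have hw := inG_PPT hN hB.
  by split; [apply/PPT_fA/PPT_fB | left; apply: LAB; left].
- rewrite expr2 !mapt_mul !maptC maptB.
  have hw := inG_PPT hN hB.
  by split; [apply/PPT_fC/PPT_fC | right; apply: RCC].
- case: k hk => [//|k] _; rewrite exprS; case: k => [|k].
    rewrite expr0 mulr1 mapt_mul maptC maptB.
    by split; [apply/PPT_fC | right; apply: RCB hs].
  rewrite exprS !mapt_mul !maptC maptB.
  have hw : PPT (mapt (mC ^+ k) (fB s)).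
    by elim: k => [|k IH]; [rewrite expr0 mapt1 | rewrite exprS mapt_mul maptC; apply: PPT_fC].
  by split; [apply/PPT_fC/PPT_fC | right; apply: RCC].
- rewrite !mapt_mul maptC !maptB.
  have hw := inG_PPT hN hB.
  by split; [apply/PPT_fC/PPT_fB | right; apply: RCB; left].
- rewrite expr2 !mapt_mul !maptA maptB.
  have hw := inG_PPT hN hB.
  have [h1 h2] := powAC k (PPT_fA (PPT_fA hw)) (LAA hw).
  by split; [|left].
- rewrite !mapt_mul maptA !maptB.
  have hw := inG_PPT hN hB.
  have [h1 h2] := powAC k (PPT_fA (PPT_fB hw)) (LAB (or_introl hw)).
  by split; [|left].
- rewrite !mapt_mul maptA maptB.
  have [h1 h2] := powAC k (PPT_fA hB) (LAB hs).
  by split; [|left].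
- rewrite expr2 !mapt_mul !maptC maptB.
  have hw := inG_PPT hN hB.
  have [h1 h2] := powCA k (PPT_fC (PPT_fC hw)) (RCC hw).
  by split; [|right].
- rewrite !mapt_mul maptC !maptB.
  have hw := inG_PPT hN hB.
  have [h1 h2] := powCA k (PPT_fC (PPT_fB hw)) (RCB (or_introl hw)).
  by split; [|right].
- rewrite !mapt_mul maptC maptB.
  have [h1 h2] := powCA k (PPT_fC hB) (RCB hs).
  by split; [|right].
Qed.

Lemma kdiv (x y z a b c k : int) : gcdz (gcdz x y) z = 1 ->
  x = a * k -> y = b * k -> z = c * k -> 0 < k -> k = 1.
Proof.
move=> hg ex ey ez hk.
have dx : x \in dvdz k by apply/dvdzP; exists a.
have dy : y \in dvdz k by apply/dvdzP; exists b.
have dz : z \in dvdz k by apply/dvdzP; exists c.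
have : 1 \in dvdz k by rewrite -hg !dvdz_gcd dx dy dz.
rewrite dvdz1; clear dx dy dz ex ey ez; case: k hk => [n|n] //= _ /eqP -> //.
Qed.

Lemma trich x y z : PPT (x, y, z) -> (x, y, z) <> (3, 4, 5) ->
  [\/ (0 < U x y z)%Z /\ (V x y z < 0)%Z,
      (0 < U x y z)%Z /\ (0 < V x y z)%Z |
      (U x y z < 0)%Z /\ (0 < V x y z)%Z].
Proof.
move=> H hne; have [hx hy hz he] := PPTz H.
have Hg : gcdz (gcdz x y) z = 1 by case: H => _ [_ [_ [_ [hg _]]]].
have H2 : y \in dvdz 2 by case: H => _ [_ [_ [h2 _]]].
case: (Z.lt_total (U x y z) 0) => [hu|[hu|hu]];
case: (Z.lt_total (V x y z) 0) => [hv|[hv|hv]].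
- by case: (znn hx hy hz he hu hv).
- have h3 := zv0 hx hy hz he hv.
  have k1 : (2 * x - z) = 1.
    apply: (kdiv (a:=3) (b:=4) (c:=5) Hg); apply/zz_lt || apply/zz_inj; zpush; lia.
  case: hne; move/zz_inj: k1; zpush => k1; congr (_, _, _); apply/zz_inj; zpush; lia.
- by constructor 3.
- have h3 := zu0 hx hy hz he hu.
  have k1 : (2 * y - z) = 1.
    apply: (kdiv (a:=4) (b:=3) (c:=5) Hg); apply/zz_lt || apply/zz_inj; zpush; lia.
  have ey : y = 3.
    by move/zz_inj: k1; zpush => k1; apply/zz_inj; zpush; lia.
  by rewrite ey in H2.
- have h3 := zu0 hx hy hz he hu.
  have k1 : (2 * y - z) = 1.
    apply: (kdiv (a:=4) (b:=3) (c:=5) Hg); apply/zz_lt || apply/zz_inj; zpush; lia.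
  have ey : y = 3.
    by move/zz_inj: k1; zpush => k1; apply/zz_inj; zpush; lia.
  by rewrite ey in H2.
- have h3 := zu0 hx hy hz he hu.
  have k1 : (2 * y - z) = 1.
    apply: (kdiv (a:=4) (b:=3) (c:=5) Hg); apply/zz_lt || apply/zz_inj; zpush; lia.
  have ey : y = 3.
    by move/zz_inj: k1; zpush => k1; apply/zz_inj; zpush; lia.
  by rewrite ey in H2.
- by constructor 1.
- have h3 := zv0 hx hy hz he hv.
  have k1 : (2 * x - z) = 1.
    apply: (kdiv (a:=3) (b:=4) (c:=5) Hg); apply/zz_lt || apply/zz_inj; zpush; lia.
  case: hne; move/zz_inj: k1; zpush => k1; congr (_, _, _); apply/zz_inj; zpush; lia.
- by constructor 2.
Qed.

Lemma gz_lt x y z : PPT (x, y, z) -> (zz (- (2*x) - 2*y + 3*z) < zz z)%Z.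
Proof.
move=> H; have [hx hy hz he] := PPTz H; have := zsum hx hy hz he; zpush; lia.
Qed.

Lemma desc t : PPT t -> t <> (3, 4, 5) ->
  exists t', [/\ PPT t', (zz t'.2 < zz t.2)%Z & [\/ t = fA t', t = fB t' | t = fC t']].
Proof.
case: t => [[x y] z] H hne.
case: (trich H hne) => [[hu hv]|[hu hv]|[hu hv]].
- by exists (gA (x, y, z)); split; [apply: PPT_gA | apply: gz_lt | constructor 1; rewrite fgA].
- by exists (gB (x, y, z)); split; [apply: PPT_gB | apply: gz_lt | constructor 2; rewrite fgB].
- by exists (gC (x, y, z)); split; [apply: PPT_gC | apply: gz_lt | constructor 3; rewrite fgC].
Qed.

Lemma descL t : PPT t -> Lr t -> [/\ PPT (gA t), (zz (gA t).2 < zz t.2)%Z & t = fA (gA t)].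
Proof.
case: t => [[x y] z] H hL0; have hL1 : 2 * x < z := hL0.
have hL : (2 * zz x < zz z)%Z by move/zz_lt: hL1; zpush; lia.
have [hx hy hz he] := PPTz H.
have hu := zL hx hy hz he hL; have [lx ly] := zlt hx hy hz he.
split; [apply: PPT_gA => //; lia | exact: gz_lt H | by rewrite fgA].
Qed.

Lemma descR t : PPT t -> Rr t -> [/\ PPT (gC t), (zz (gC t).2 < zz t.2)%Z & t = fC (gC t)].
Proof.
case: t => [[x y] z] H hR0; have hR1 : 2 * y < z := hR0.
have hR : (2 * zz y < zz z)%Z by move/zz_lt: hR1; zpush; lia.
have [hx hy hz he] := PPTz H.
have hv := zR hx hy hz he hR; have [lx ly] := zlt hx hy hz he.
split; [apply: PPT_gC => //; lia | exact: gz_lt H | by rewrite fgC].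
Qed.

Lemma PPT_z t : PPT t -> (0 < zz t.2)%Z.
Proof. by case: t => [[x y] z] H; have [] := PPTz H. Qed.

Lemma complete n : forall t, (zz t.2 < Z.of_nat n)%Z -> PPT t ->
  exists N, inG N /\ t = mapt N (fB t101).
Proof.
elim: n => [|n IH] t hn H; first by have := PPT_z H; lia.
case: (eqVneq t (3, 4, 5)) => [->|hne].
  by exists 1; split; [constructor | rewrite mapt1 fB101].
have hne' : t <> (3, 4, 5) by apply/eqP.
have [t' [H' hz hc]] := desc H hne'.
rewrite Nat2Z.inj_succ in hn.
have [N [hN e]] := IH t' ltac:(lia) H'.
case: hc => ->; rewrite e.
- by exists (mA * N); split; [constructor | rewrite mapt_mul maptA].
- by exists (mB * N); split; [constructor | rewrite mapt_mul maptB].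
- by exists (mC * N); split; [constructor | rewrite mapt_mul maptC].
Qed.

Lemma complete' t : PPT t -> exists N, inG N /\ t = mapt N (fB t101).
Proof.
move=> H; apply: (complete (n := Z.to_nat (zz t.2 + 1))) => //.
have := PPT_z H; lia.
Qed.

Inductive inHL : 'M[int]_3 -> Prop :=
  | L1 N : inG N -> inHL (mA ^+ 2 * N * mB)
  | L2 k : (0 < k)%nat -> inHL (mA ^+ k * mB)
  | L3 N : inG N -> inHL (mA * mB * N * mB)
  | L7 N k : inG N -> (0 < k)%nat -> inHL ((mA * mC) ^+ k * mA ^+ 2 * N * mB)
  | L8 N k : inG N -> (0 < k)%nat -> inHL ((mA * mC) ^+ k * mA * mB * N * mB)
  | L9 k : (0 < k)%nat -> inHL ((mA * mC) ^+ k * mA * mB).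

Inductive inHR : 'M[int]_3 -> Prop :=
  | R4 N : inG N -> inHR (mC ^+ 2 * N * mB)
  | R5 k : (0 < k)%nat -> inHR (mC ^+ k * mB)
  | R6 N : inG N -> inHR (mC * mB * N * mB)
  | R10 N k : inG N -> (0 < k)%nat -> inHR ((mC * mA) ^+ k * mC ^+ 2 * N * mB)
  | R11 N k : inG N -> (0 < k)%nat -> inHR ((mC * mA) ^+ k * mC * mB * N * mB)
  | R12 k : (0 < k)%nat -> inHR ((mC * mA) ^+ k * mC * mB).

Lemma HL_H M : inHL M -> inH M.
Proof. case=> [N h|k h|N h|N k h h'|N k h h'|k h]; [exact: H1 h|exact: H2 h|exact: H3 h|exact: H7 h h'|exact: H8 h h'|exact: H9 h]. Qed.
Lemma HR_H M : inHR M -> inH M.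
Proof. case=> [N h|k h|N h|N k h h'|N k h h'|k h]; [exact: H4 h|exact: H5 h|exact: H6 h|exact: H10 h h'|exact: H11 h h'|exact: H12 h]. Qed.

Lemma inG_powA k : inG (mA ^+ k).
Proof. by elim: k => [|k IH]; [rewrite expr0; constructor | rewrite exprS; constructor]. Qed.
Lemma inG_powC k : inG (mC ^+ k).
Proof. by elim: k => [|k IH]; [rewrite expr0; constructor | rewrite exprS; constructor]. Qed.

Lemma HL_AC M : inHL M -> inHL (mA * mC * M).
Proof.
case.
- move=> N hN.
  have -> : mA * mC * (mA ^+ 2 * N * mB) = (mA * mC) ^+ 1 * mA ^+ 2 * N * mB.
    by rewrite expr1 !mulrA.
  exact: L7.
- case=> [//|k] _; case: k => [|k].
    have -> : mA * mC * (mA ^+ 1 * mB) = (mA * mC) ^+ 1 * mA * mB.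
      by rewrite !expr1 !mulrA.
    exact: L9.
  have -> : mA * mC * (mA ^+ k.+2 * mB) = (mA * mC) ^+ 1 * mA ^+ 2 * mA ^+ k * mB.
    by rewrite expr1 -(mulrA _ (mA ^+ 2)) -exprD !mulrA.
  by apply: L7 => //; apply: inG_powA.
- move=> N hN.
  have -> : mA * mC * (mA * mB * N * mB) = (mA * mC) ^+ 1 * mA * mB * N * mB.
    by rewrite expr1 !mulrA.
  exact: L8.
- move=> N k hN hk.
  have -> : mA * mC * ((mA * mC) ^+ k * mA ^+ 2 * N * mB) = (mA * mC) ^+ k.+1 * mA ^+ 2 * N * mB.
    by rewrite [(_ * _) ^+ k.+1]exprS !mulrA.
  exact: L7.
- move=> N k hN hk.
  have -> : mA * mC * ((mA * mC) ^+ k * mA * mB * N * mB) = (mA * mC) ^+ k.+1 * mA * mB * N * mB.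
    by rewrite [(_ * _) ^+ k.+1]exprS !mulrA.
  exact: L8.
- move=> k hk.
  have -> : mA * mC * ((mA * mC) ^+ k * mA * mB) = (mA * mC) ^+ k.+1 * mA * mB.
    by rewrite [(_ * _) ^+ k.+1]exprS !mulrA.
  exact: L9.
Qed.

Lemma HR_CA M : inHR M -> inHR (mC * mA * M).
Proof.
case.
- move=> N hN.
  have -> : mC * mA * (mC ^+ 2 * N * mB) = (mC * mA) ^+ 1 * mC ^+ 2 * N * mB.
    by rewrite expr1 !mulrA.
  exact: R10.
- case=> [//|k] _; case: k => [|k].
    have -> : mC * mA * (mC ^+ 1 * mB) = (mC * mA) ^+ 1 * mC * mB.
      by rewrite !expr1 !mulrA.
    exact: R12.
  have -> : mC * mA * (mC ^+ k.+2 * mB) = (mC * mA) ^+ 1 * mC ^+ 2 * mC ^+ k * mB.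
    by rewrite expr1 -(mulrA _ (mC ^+ 2)) -exprD !mulrA.
  by apply: R10 => //; apply: inG_powC.
- move=> N hN.
  have -> : mC * mA * (mC * mB * N * mB) = (mC * mA) ^+ 1 * mC * mB * N * mB.
    by rewrite expr1 !mulrA.
  exact: R11.
- move=> N k hN hk.
  have -> : mC * mA * ((mC * mA) ^+ k * mC ^+ 2 * N * mB) = (mC * mA) ^+ k.+1 * mC ^+ 2 * N * mB.
    by rewrite [(_ * _) ^+ k.+1]exprS !mulrA.
  exact: R10.
- move=> N k hN hk.
  have -> : mC * mA * ((mC * mA) ^+ k * mC * mB * N * mB) = (mC * mA) ^+ k.+1 * mC * mB * N * mB.
    by rewrite [(_ * _) ^+ k.+1]exprS !mulrA.
  exact: R11.
- move=> k hk.
  have -> : mC * mA * ((mC * mA) ^+ k * mC * mB) = (mC * mA) ^+ k.+1 * mC * mB.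
    by rewrite [(_ * _) ^+ k.+1]exprS !mulrA.
  exact: R12.
Qed.

Lemma Lcase n : forall t, (zz t.2 < Z.of_nat n)%Z -> PPT t -> Lr t ->
  exists M, inHL M /\ t = mapt M t101.
Proof.
elim: n => [|n IH] t hn H hL; first by have := PPT_z H; lia.
rewrite Nat2Z.inj_succ in hn.
have [H1 hz1 e1] := descL H hL.
case: (eqVneq (gA t) (3, 4, 5)) => [h345|hne].
  exists (mA ^+ 1 * mB); split; first by apply: L2.
  by rewrite expr1 !mapt_mul maptA maptB fB101 -h345 -e1.
have hne' : gA t <> (3, 4, 5) by apply/eqP.
have [t2 [H2' hz2 hc]] := desc H1 hne'.
case: hc => e2.
- have [N [hN eN]] := complete' H2'.
  exists (mA ^+ 2 * N * mB); split; first by apply: L1.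
  by rewrite expr2 !mapt_mul !maptA !maptB -eN -e2 -e1.
- have [N [hN eN]] := complete' H2'.
  exists (mA * mB * N * mB); split; first by apply: L3.
  by rewrite !mapt_mul maptA !maptB -eN -e2 -e1.
- have hL2 : Lr t2 by apply/LAC; rewrite -e2 -e1.
  have [M2 [hM2 eM2]] := IH t2 ltac:(lia) H2' hL2.
  exists (mA * mC * M2); split; first by apply: HL_AC.
  by rewrite !mapt_mul maptA maptC -eM2 -e2 -e1.
Qed.

Lemma Rcase n : forall t, (zz t.2 < Z.of_nat n)%Z -> PPT t -> Rr t ->
  exists M, inHR M /\ t = mapt M t101.
Proof.
elim: n => [|n IH] t hn H hL; first by have := PPT_z H; lia.
rewrite Nat2Z.inj_succ in hn.
have [H1 hz1 e1] := descR H hL.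
case: (eqVneq (gC t) (3, 4, 5)) => [h345|hne].
  exists (mC ^+ 1 * mB); split; first by apply: R5.
  by rewrite expr1 !mapt_mul maptC maptB fB101 -h345 -e1.
have hne' : gC t <> (3, 4, 5) by apply/eqP.
have [t2 [H2' hz2 hc]] := desc H1 hne'.
case: hc => e2.
- have hL2 : Rr t2 by apply/RCA; rewrite -e2 -e1.
  have [M2 [hM2 eM2]] := IH t2 ltac:(lia) H2' hL2.
  exists (mC * mA * M2); split; first by apply: HR_CA.
  by rewrite !mapt_mul maptC maptA -eM2 -e2 -e1.
- have [N [hN eN]] := complete' H2'.
  exists (mC * mB * N * mB); split; first by apply: R6.
  by rewrite !mapt_mul maptC !maptB -eN -e2 -e1.
- have [N [hN eN]] := complete' H2'.
  exists (mC ^+ 2 * N * mB); split; first by apply: R4.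
  by rewrite expr2 !mapt_mul !maptC !maptB -eN -e2 -e1.
Qed.

Lemma partB t : PPT t -> Lr t \/ Rr t -> exists M, inH M /\ t = mapt M t101.
Proof.
move=> H hLR.
have hn : (zz t.2 < Z.of_nat (Z.to_nat (zz t.2 + 1)))%Z by have := PPT_z H; lia.
case: hLR => h.
- by have [M [hM e]] := Lcase hn H h; exists M; split => //; apply: HL_H.
- by have [M [hM e]] := Rcase hn H h; exists M; split => //; apply: HR_H.
Qed.

Lemma actsetE (X : 'M[int]_3 -> Prop) (Y : triple -> Prop) t :
  actset X Y t <-> exists M s, [/\ X M, Y s & t = mapt M s].
Proof.
split.
  case=> M [hM [s [hs e]]]; exists M, s; split => //.
  by apply: colv_inj; rewrite /mapt trpK.
case=> M [s [hM hs e]]; exists M; split => //; exists s; split => //.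
by rewrite e /mapt trpK.
Qed.

Lemma Pcal_PPT' s : Pcal s -> PPT' s.
Proof. by case=> [[h _]|->]; [left | right]. Qed.

Lemma good_Pcal t : PPT t -> Lr t \/ Rr t -> Pcal t /\ t <> t101.
Proof.
case: t => [[x y] z] H hLR; split.
  left; split => //; rewrite minEle /=; case: ifP => hxy.
    by case: hLR => //; rewrite /Rr /= => h; apply: le_lt_trans h; rewrite ler_pM2l.
  case: hLR => //; rewrite /Lr /= => h; apply: le_lt_trans h.
  by rewrite ler_pM2l // ltW // ltNge hxy.
move=> e; case: e H => _ -> _ [_ [hy _]].
by [].
Qed.

Lemma Pcal_good t : Pcal t -> t <> t101 -> PPT t /\ (Lr t \/ Rr t).
Proof.
case=> [[H hm] _|->] //; split => //.
move: hm; case: t H => [[x y] z] H /=; rewrite minEle; case: ifP => _ h.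
  by left.
by right.
Qed.

Theorem lemma2p1 :
  (forall t : triple, actset inH PPT' t <-> actset inH Pcal t) /\
  (forall t : triple, actset inH Pcal t <-> (Pcal t /\ t <> t101)).
Proof.
have fwd : forall t, actset inH PPT' t -> Pcal t /\ t <> t101.
  move=> t /actsetE [M [s [hM hs ->]]].
  by have [H hLR] := partA hM hs; apply: good_Pcal.
have bwd : forall t, Pcal t /\ t <> t101 -> actset inH Pcal t.
  move=> t [hP hne]; have [H hLR] := Pcal_good hP hne.
  have [M [hM e]] := partB H hLR.
  apply/actsetE; exists M, t101; split => //; by right.
split => t; split.
- by move/fwd/bwd.
- by move/actsetE => [M [s [hM hs e]]]; apply/actsetE; exists M, s; split => //; apply: Pcal_PPT'.
- by move/actsetE => [M [s [hM hs e]]]; apply: fwd; apply/actsetE; exists M, s; split => //; apply: Pcal_PPT'.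
- exact: bwd.
Qed.
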